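(* Let $A>0$ and let $F_k=(F_k^1,\dots,F_k^d)\in\mathbb{R}^d$, $k=1,2$, be constant vectors with $F_1^d>0$ and $F_2^d\ge0$. Define $$F(y)=\begin{cases}F_1,& y\in\Pi_1=\{y\in\mathbb{R}^d: y^d<A\},\\ F_2,& y\in\Pi_2=\{y\in\mathbb{R}^d: y^d\ge A\}.\end{cases}$$ Let $\Lambda\subset\Pi_1$ be the closure of an open connected set with piecewise smooth boundary. For $x\in\Lambda$ let $y(t,x)$ solve $\frac{d^2y}{dt^2}=F(y)$, $y(0,x)=x$, $\frac{dy}{dt}(0,x)=0$ (zero initial velocities). Then there are no collisions ($y(t,x_1)\ne y(t,x_2)$ for all $t\ge0$ and all $x_1\ne x_2$ in $\Lambda$) if and only if $F_1^d\le F_2^d$.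
   Context: $y^d$ denotes the $d$-th coordinate of $y\in\mathbb{R}^d$. *)

(* Defs.v *)
From Stdlib Require Import Reals.
From Coquelicot Require Import Coquelicot.
Open Scope R_scope.

(* A point of R^d is represented as a function nat -> R; only the
   coordinates 0, ..., d-1 are meaningful.  The paper's coordinate y^d
   (the last one) is index (d-1). *)
Definition pt := nat -> R.

Definition eqd (d : nat) (x y : pt) : Prop :=
  forall i, (i < d)%nat -> x i = y i.

(* sup-norm ball: |x - y|_oo < r (induces the usual topology of R^d) *)
Definition near_lt (d : nat) (x y : pt) (r : R) : Prop :=
  forall i, (i < d)%nat -> Rabs (x i - y i) < r.

Definition open_d (d : nat) (O : pt -> Prop) : Prop :=
  forall x, O x -> exists r, 0 < r /\ forall z, near_lt d x z r -> O z.

Definition closure_d (d : nat) (O : pt -> Prop) (x : pt) : Prop :=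
  forall r, 0 < r -> exists z, O z /\ near_lt d x z r.

Definition connected_d (d : nat) (O : pt -> Prop) : Prop :=
  ~ (exists U V : pt -> Prop,
        open_d d U /\ open_d d V /\
        (forall x, O x -> U x \/ V x) /\
        (forall x, O x -> U x -> V x -> False) /\
        (exists x, O x /\ U x) /\ (exists x, O x /\ V x)).

Definition Fpw (d : nat) (A : R) (F1 F2 : pt) (y : pt) : pt :=
  if Rlt_dec (y (d - 1)%nat) A then F1 else F2.

(* y : [0,oo) -> R^d solves y'' = F(y), y(0) = x, y'(0) = 0, in the
   (Caratheodory / integral) sense appropriate for a discontinuous
   right-hand side: there is a velocity v with, for all t >= 0,
     y(t) = x + \int_0^t v(s) ds   and   v(t) = \int_0^t F(y(s)) ds. *)
Definition is_solution (d : nat) (A : R) (F1 F2 : pt) (x : pt)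
  (y : R -> pt) : Prop :=
  exists v : R -> pt,
    forall t, 0 <= t -> forall i, (i < d)%nat ->
      is_RInt (fun s => v s i) 0 t (y t i - x i) /\
      is_RInt (fun s => Fpw d A F1 F2 (y s) i) 0 t (v t i).

(* Main.v *)
Require Import Defs.
From Stdlib Require Import Reals Lra Psatz Lia.
From Coquelicot Require Import Coquelicot.
Open Scope R_scope.
Lemma int_lin (h : R -> R) a b p q l : a <= b ->
  (forall s, a < s < b -> h s = p + q*s) -> is_RInt h a b l ->
  l = p*(b-a) + q*(b*b-a*a)/2.
Proof.
intros Hab Hh Hl.
assert (H : is_RInt (fun s => p + q*s) a b
   (minus ((fun s => p*s + q*s*s/2) b) ((fun s => p*s + q*s*s/2) a))).
{ apply (is_RInt_derive (fun s => p*s + q*s*s/2)).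
  - intros x _. auto_derive; auto. field.
  - intros x _. apply (ex_derive_continuous (fun s => p + q*s)). auto_derive; auto. }
apply is_RInt_ext with (g := h) in H.
2:{ intros x. rewrite Rmin_left, Rmax_right by lra. intros; symmetry; auto. }
apply (is_RInt_unique (V:=R_CompleteNormedModule)) in H. apply (is_RInt_unique (V:=R_CompleteNormedModule)) in Hl. rewrite Hl in H.
rewrite H. unfold minus, plus, opp; simpl. field.
Qed.
Lemma uniq (h : R -> R) a b (l1 l2 : R) : is_RInt h a b l1 -> is_RInt h a b l2 -> l1 = l2.
Proof.
intros H1 H2. apply (is_RInt_unique (V:=R_CompleteNormedModule)) in H1.
apply (is_RInt_unique (V:=R_CompleteNormedModule)) in H2. congruence.
Qed.

Lemma splitI (h : R -> R) T t (l : R) : 0 <= T <= t -> is_RInt h 0 t l ->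
  exists l1 l2 : R, is_RInt h 0 T l1 /\ is_RInt h T t l2 /\ l = l1 + l2.
Proof.
intros HT Hl.
assert (E : ex_RInt h 0 t) by (exists l; exact Hl).
assert (E1 : ex_RInt h 0 T) by (apply (ex_RInt_Chasles_1 h 0 T t); auto; lra).
assert (E2 : ex_RInt h T t) by (apply (ex_RInt_Chasles_2 h 0 T t); auto; lra).
exists (RInt h 0 T), (RInt h T t). split; [apply (RInt_correct (V:=R_CompleteNormedModule)); auto|].
split; [apply (RInt_correct (V:=R_CompleteNormedModule)); auto|].
pose proof (RInt_Chasles (V:=R_CompleteNormedModule) h 0 T t E1 E2) as C.
apply (is_RInt_unique (V:=R_CompleteNormedModule)) in Hl.
rewrite <- Hl, <- C. reflexivity.
Qed.

Definition Vf c1 c2 T t := if Rle_dec t T then c1*t else c1*T + c2*(t-T).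
Definition Yf c1 c2 T t := if Rle_dec t T then c1*t*t/2
  else c1*T*T/2 + c1*T*(t-T) + c2*(t-T)*(t-T)/2.

Lemma pw_v (h : R -> R) c1 c2 T t (l : R) : 0 <= T -> 0 <= t ->
  (forall s, 0 < s < t -> s < T -> h s = c1) ->
  (forall s, 0 < s < t -> T < s -> h s = c2) ->
  is_RInt h 0 t l -> l = Vf c1 c2 T t.
Proof.
intros HT Ht H1 H2 Hl. unfold Vf. destruct (Rle_dec t T) as [Hle|Hlt].
- rewrite (int_lin h 0 t c1 0 l Ht); [field| |exact Hl].
  intros s Hs. rewrite H1 by lra. ring.
- destruct (splitI h T t l) as [l1 [l2 [I1 [I2 ->]]]]; [lra|exact Hl|].
  rewrite (int_lin h 0 T c1 0 l1 HT), (int_lin h T t c2 0 l2); try lra; auto.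
  + intros s Hs. rewrite H2 by lra. ring.
  + intros s Hs. rewrite H1 by lra. ring.
Qed.

Lemma pw_y (v : R -> R) c1 c2 T t (l : R) : 0 <= T -> 0 <= t ->
  (forall s, 0 < s < t -> v s = Vf c1 c2 T s) ->
  is_RInt v 0 t l -> l = Yf c1 c2 T t.
Proof.
intros HT Ht H1 Hl. unfold Yf. destruct (Rle_dec t T) as [Hle|Hlt].
- rewrite (int_lin v 0 t 0 c1 l Ht); [field| |exact Hl].
  intros s Hs. rewrite H1 by lra. unfold Vf. destruct (Rle_dec s T); [ring|lra].
- destruct (splitI v T t l) as [l1 [l2 [I1 [I2 ->]]]]; [lra|exact Hl|].
  rewrite (int_lin v 0 T 0 c1 l1 HT), (int_lin v T t (c1*T - c2*T) c2 l2); try lra; auto.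
  + intros s Hs. rewrite H1 by lra. unfold Vf. destruct (Rle_dec s T); [lra|ring].
  + intros s Hs. rewrite H1 by lra. unfold Vf. destruct (Rle_dec s T); [ring|lra].
Qed.

Lemma const_int (c a b : R) : is_RInt (fun _ => c) a b (c*(b-a)).
Proof.
replace (c*(b-a)) with (scal (b-a) c). apply (is_RInt_const (V:=R_NormedModule)).
unfold scal; simpl; unfold mult; simpl. ring.
Qed.

Lemma key d A F1 F2 x y : (0<d)%nat -> 0 < F1 (d-1)%nat -> 0 <= F2 (d-1)%nat ->
  x (d-1)%nat < A -> is_solution d A F1 F2 x y ->
  forall t i, 0 <= t -> (i<d)%nat ->
  y t i = x i + Yf (F1 i) (F2 i) (sqrt (2*(A - x (d-1)%nat)/F1 (d-1)%nat)) t.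
Proof.
intros Hd Hf1 Hf2 Ha [v Hv].
set (D := (d-1)%nat) in *.
assert (HD : (D < d)%nat) by (unfold D; lia).
set (f1 := F1 D) in *. set (f2 := F2 D) in *. set (M := f1 + f2).
set (a := x D) in *.
set (T := sqrt (2*(A-a)/f1)).
assert (HT0 : 0 <= T) by apply sqrt_pos.
assert (HTT : T*T = 2*(A-a)/f1).
{ unfold T. apply sqrt_sqrt. apply Rmult_le_pos; [lra|]. left; apply Rinv_0_lt_compat; lra. }
assert (gb : forall s, 0 <= Fpw d A F1 F2 (y s) D <= M).
{ intros s. unfold Fpw. fold D. destruct (Rlt_dec (y s D) A); unfold M; fold f1 f2; lra. }
assert (vb : forall s, 0 <= s -> 0 <= v s D <= M*s).
{ intros s Hs. destruct (Hv s Hs D HD) as [_ H2]. split.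
  - apply (is_RInt_ge_0 _ 0 s _ Hs H2). intros; apply gb.
  - replace (M*s) with (M*(s-0)) by ring.
    apply (is_RInt_le _ _ 0 s _ _ Hs H2 (const_int M 0 s)). intros; apply gb. }
assert (w0 : y 0 D = a).
{ destruct (Hv 0 (Rle_refl 0) D HD) as [H1 _].
  pose proof (uniq _ _ _ _ _ H1 (is_RInt_point (V:=R_NormedModule) _ 0)) as E.
  assert (E2 : y 0 D - x D = 0) by (rewrite E; reflexivity). unfold a; lra. }
assert (lip : forall s1 s2, 0 <= s1 <= s2 -> 0 <= y s2 D - y s1 D <= M*s2*(s2-s1)).
{ intros s1 s2 Hs. destruct (Hv s2 ltac:(lra) D HD) as [H1 _].
  destruct (splitI _ s1 s2 _ Hs H1) as [l1 [l2 [I1 [I2 E]]]].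
  destruct (Hv s1 ltac:(lra) D HD) as [H1' _].
  pose proof (uniq _ _ _ _ _ I1 H1') as E1.
  assert (0 <= l2 <= M*s2*(s2-s1)).
  { split.
    - apply (is_RInt_ge_0 _ s1 s2 _ ltac:(lra) I2). intros u Hu. apply vb; lra.
    - apply (is_RInt_le _ _ s1 s2 _ _ ltac:(lra) I2 (const_int (M*s2) s1 s2)).
      intros u Hu. pose proof (vb u ltac:(lra)).
      assert (0 <= M) by (unfold M; lra).
      assert (M*u <= M*s2) by (apply Rmult_le_compat_l; lra). lra. }
  lra. }
assert (ph1f : forall s, 0 <= s -> (forall u, 0 < u < s -> y u D < A) ->
          forall i, (i < d)%nat -> y s i = x i + F1 i * s * s / 2).
{ intros s Hs Hw i Hi. destruct (Hv s Hs i Hi) as [H1 _].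
  assert (Ev : forall u, 0 < u < s -> v u i = 0 + F1 i * u).
  { intros u Hu. destruct (Hv u ltac:(lra) i Hi) as [_ H2].
    assert (Hh : forall r, 0 < r < u -> Fpw d A F1 F2 (y r) i = F1 i + 0*r).
    { intros r Hr. unfold Fpw. fold D. destruct (Rlt_dec (y r D) A) as [|n].
      ring. exfalso; apply n, Hw; lra. }
    rewrite (int_lin _ 0 u (F1 i) 0 _ ltac:(lra) Hh H2). field. }
  pose proof (int_lin _ 0 s 0 (F1 i) _ Hs Ev H1). lra. }
assert (HM : 0 <= M) by (unfold M; lra).
assert (ph1 : forall t0, 0 <= t0 < T -> y t0 D < A).
{ intros t0 Ht0.
  set (c := a + f1*t0*t0/2).
  assert (Hc : c < A).
  { assert (t0*t0 < T*T) by nra. rewrite HTT in H.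
    unfold c. apply Rmult_lt_compat_l with (r := f1/2) in H; [|lra].
    replace (f1/2*(2*(A-a)/f1)) with (A-a) in H by (field; lra). nra. }
  set (dl := (A - c)/(M*t0+1)).
  assert (Hdl : 0 < dl) by (unfold dl; apply Rdiv_lt_0_compat; nra).
  assert (Hdl2 : M*t0*dl < A - c).
  { unfold dl. apply Rmult_lt_reg_r with (r := M*t0+1); [nra|].
    field_simplify; [|nra]. nra. }
  assert (Ind : forall n, forall u, 0 <= u <= Rmin t0 (INR n * dl) -> y u D < A).
  { induction n as [|n IH]; intros u Hu.
    - simpl in Hu. rewrite Rmult_0_l, Rmin_right in Hu by lra.
      replace u with 0 by lra. rewrite w0; lra.
    - set (s := Rmin t0 (INR n * dl)) in *.
      assert (Hs0 : 0 <= s) by (unfold s; apply Rmin_glb; [lra| pose proof (pos_INR n); nra]).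
      destruct (Rle_dec u s) as [Hus|Hus]; [apply IH; lra|].
      assert (Hu1 : u <= t0) by (pose proof (Rmin_l t0 (INR (S n) * dl)); lra).
      assert (Hu2 : u <= INR n * dl + dl) by
        (pose proof (Rmin_r t0 (INR (S n) * dl)); rewrite S_INR in *; lra).
      assert (Hs : s = INR n * dl).
      { clear -Hus Hu1. unfold s in *. unfold Rmin in *.
        destruct (Rle_dec t0 (INR n * dl)); lra. }
      assert (ws : y s D = a + f1*s*s/2).
      { rewrite (ph1f s Hs0 (fun u' Hu' => IH u' ltac:(lra)) D HD). reflexivity. }
      assert (ss : s*s <= t0*t0) by (assert (s <= t0) by (unfold s; apply Rmin_l); nra).
      pose proof (lip s u ltac:(lra)) as L.
      assert (M*u*(u-s) <= M*t0*dl).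
      { apply Rmult_le_compat; [nra|lra| apply Rmult_le_compat_l; lra | lra]. }
      assert (f1*s*s/2 <= f1*t0*t0/2) by nra.
      unfold c in Hdl2. lra. }
  destruct (INR_archimed dl t0 Hdl) as [n Hn].
  apply (Ind n t0). rewrite Rmin_left by lra. lra. }
assert (wT : y T D = A).
{ rewrite (ph1f T HT0 (fun u Hu => ph1 u ltac:(lra)) D HD). 
  assert (E : f1*(T*T) = 2*(A-a)) by (rewrite HTT; field; lra).
  change (F1 D) with f1. change (x D) with a. nra. }
assert (ph2 : forall u, T <= u -> A <= y u D).
{ intros u Hu. pose proof (lip T u ltac:(lra)). lra. }
intros t i Ht Hi.
destruct (Hv t Ht i Hi) as [H1 _].
assert (Ev : forall u, 0 < u < t -> v u i = Vf (F1 i) (F2 i) T u).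
{ intros u Hu. destruct (Hv u ltac:(lra) i Hi) as [_ H2].
  apply (pw_v (fun r => Fpw d A F1 F2 (y r) i) (F1 i) (F2 i) T u (v u i) HT0 ltac:(lra)); [| |exact H2].
  - intros r Hr HrT. unfold Fpw. fold D. destruct (Rlt_dec (y r D) A) as [|n]; [reflexivity|].
    exfalso; apply n, ph1; lra.
  - intros r Hr HrT. unfold Fpw. fold D. destruct (Rlt_dec (y r D) A) as [n|]; [|reflexivity].
    pose proof (ph2 r ltac:(lra)). lra. }
pose proof (pw_y (fun r => v r i) (F1 i) (F2 i) T t _ HT0 Ht Ev H1). lra.
Qed.

Fixpoint maxabs (F1 F2 : pt) (n : nat) : R :=
  match n with O => 0 | S m => Rmax (maxabs F1 F2 m) (Rabs (F1 m - F2 m)) end.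

Lemma maxabs_pos F1 F2 n : 0 <= maxabs F1 F2 n.
Proof. induction n; simpl. lra. apply Rle_trans with (1 := IHn), Rmax_l. Qed.

Lemma maxabs_ge F1 F2 n i : (i < n)%nat -> Rabs (F1 i - F2 i) <= maxabs F1 F2 n.
Proof.
induction n; intros H. lia. simpl.
destruct (Nat.eq_dec i n) as [->|Hn]. apply Rmax_r.
apply Rle_trans with (2 := Rmax_l _ _). apply IHn. lia.
Qed.

Lemma mono f1 f2 A T1 T2 t : 0 < f1 -> f1 <= f2 -> 0 <= T1 < T2 -> 0 <= t ->
  A - f1*T2*T2/2 + Yf f1 f2 T2 t < A - f1*T1*T1/2 + Yf f1 f2 T1 t.
Proof.
intros Hf1 Hf Ht Ht0. unfold Yf.
destruct (Rle_dec t T1); destruct (Rle_dec t T2).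
- assert (T1*T1 < T2*T2) by nra.
  assert (0 < f1*(T2*T2 - T1*T1)) by (apply Rmult_lt_0_compat; lra). lra.
- lra.
- assert (0 < f2*(t-T1)*(t-T1)) by (apply Rmult_lt_0_compat; [apply Rmult_lt_0_compat|]; lra).
  assert (0 <= f1*T1*(t-T1)) by (apply Rmult_le_pos; [apply Rmult_le_pos|]; lra).
  assert (t*t <= T2*T2) by nra.
  assert (0 <= f1*(T2*T2 - t*t)) by (apply Rmult_le_pos; lra). lra.
- assert (E : A - f1 * T1 * T1 / 2 + (f1 * T1 * T1 / 2 + f1 * T1 * (t - T1) + f2 * (t - T1) * (t - T1) / 2)
   - (A - f1 * T2 * T2 / 2 + (f1 * T2 * T2 / 2 + f1 * T2 * (t - T2) + f2 * (t - T2) * (t - T2) / 2))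
   = (T2 - T1) * ((f2 - f1)*(t - (T1+T2)/2) + f1*(T1+T2)/2)) by field.
  assert (0 <= (f2 - f1)*(t - (T1+T2)/2)) by (apply Rmult_le_pos; lra).
  assert (0 < (T2 - T1) * ((f2 - f1)*(t - (T1+T2)/2) + f1*(T1+T2)/2)).
  { apply Rmult_lt_0_compat. lra. assert (0 < f1*(T1+T2)/2) by (apply Rmult_lt_0_compat; try apply Rmult_lt_0_compat; lra). lra. }
  lra.
Qed.

Lemma sqrt_sq_eq a f1 A : 0 < f1 -> a < A ->
  sqrt (2*(A-a)/f1) * sqrt (2*(A-a)/f1) = 2*(A-a)/f1.
Proof. intros. apply sqrt_sqrt. apply Rmult_le_pos; [lra|]. left; apply Rinv_0_lt_compat; lra. Qed.

Theorem theorem6 (d : nat) (Hd : (0 < d)%nat) (A : R) (HA : 0 < A)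
  (F1 F2 : pt) (HF1 : 0 < F1 (d - 1)%nat) (HF2 : 0 <= F2 (d - 1)%nat)
  (Omega : pt -> Prop)
  (HOopen : open_d d Omega) (HOconn : connected_d d Omega)
  (HOne : exists x, Omega x)
  (HLam : forall x, closure_d d Omega x -> x (d - 1)%nat < A)
  (y : pt -> R -> pt)
  (Hy : forall x, closure_d d Omega x -> is_solution d A F1 F2 x (y x)) :
  (forall t x1 x2, 0 <= t ->
     closure_d d Omega x1 -> closure_d d Omega x2 ->
     ~ eqd d x1 x2 -> ~ eqd d (y x1 t) (y x2 t))
  <-> F1 (d - 1)%nat <= F2 (d - 1)%nat.
Proof.
assert (HD : ((d-1) < d)%nat) by lia.
assert (Kx : forall x, closure_d d Omega x -> forall t i, 0 <= t -> (i < d)%nat ->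
  y x t i = x i + Yf (F1 i) (F2 i) (sqrt (2*(A - x (d-1)%nat)/F1 (d-1)%nat)) t).
{ intros x Hx. apply key; auto. }
assert (Cl : forall x, Omega x -> closure_d d Omega x).
{ intros x Hx r Hr. exists x. split; auto. intros i _. rewrite Rminus_eq_0, Rabs_R0. lra. }
split.
- intros Hnc. destruct (Rle_dec (F1 (d-1)%nat) (F2 (d-1)%nat)) as [|Hlt]; [assumption|exfalso].
  apply Rnot_le_lt in Hlt.
  destruct HOne as [x0 H0]. destruct (HOopen x0 H0) as [r [Hr Hball]].
  pose proof (HLam x0 (Cl x0 H0)) as La0.
  remember (d-1)%nat as D eqn:HDe.
  remember (F1 D) as f1 eqn:Hf1e. remember (F2 D) as f2 eqn:Hf2e.
  remember (x0 D) as a0 eqn:Ha0e.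
  remember (sqrt (2*(A-a0)/f1)) as T0 eqn:HT0e.
  assert (HT0 : 0 < T0).
  { rewrite HT0e. apply sqrt_lt_R0. apply Rmult_lt_0_compat; [lra|]. apply Rinv_0_lt_compat; lra. }
  assert (HT0s : T0*T0 = 2*(A-a0)/f1) by (rewrite HT0e; apply sqrt_sq_eq; auto).
  assert (Ea0 : a0 = A - f1*T0*T0/2).
  { replace (f1*T0*T0/2) with (f1/2*(T0*T0)) by (unfold Rdiv; ring). rewrite HT0s. field. lra. }
  clear HT0e HT0s.
  set (t := T0*(2*f1-f2)/(f1-f2)).
  assert (Htdef : (f1-f2)*(t-T0) = f1*T0) by (unfold t; field; lra).
  clearbody t.
  assert (HtT : T0 <= t - T0).
  { destruct (Rle_dec T0 (t-T0)) as [|n]; [assumption|exfalso].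
    apply Rnot_le_lt in n.
    assert ((f1-f2)*(t-T0) < (f1-f2)*T0) by (apply Rmult_lt_compat_l; lra).
    assert (f2*T0 >= 0) by (apply Rle_ge, Rmult_le_pos; lra). lra. }
  set (K := maxabs F1 F2 d).
  assert (HK : 0 <= K) by apply maxabs_pos.
  set (Den := 2*(t-T0)*(K+1) + 3*f1*T0 + 1).
  assert (HDen : 0 < Den).
  { unfold Den. assert (0 <= 2*(t-T0)*(K+1)) by (apply Rmult_le_pos; lra).
    assert (0 <= 3*f1*T0) by (apply Rmult_le_pos; lra). lra. }
  set (eps := Rmin (T0/2) (r/Den)).
  assert (He0 : 0 < eps) by (apply Rmin_glb_lt; [lra|apply Rdiv_lt_0_compat; lra]).
  assert (He1 : eps <= T0/2) by apply Rmin_l.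
  assert (He2 : eps*Den <= r).
  { assert (eps <= r/Den) by apply Rmin_r.
    apply Rmult_le_compat_r with (r := Den) in H; [|lra].
    replace (r/Den*Den) with r in H by (field; lra). exact H. }
  assert (HDd : Den = 2*(t-T0)*(K+1) + 3*f1*T0 + 1) by reflexivity.
  assert (HKd : K = maxabs F1 F2 d) by reflexivity.
  clearbody eps Den K.
  set (T1 := T0 - eps). set (T2 := T0 + eps).
  set (a1 := A - f1*T1*T1/2). set (a2 := A - f1*T2*T2/2).
  set (x1 := fun i => if Nat.eq_dec i D then a1 else x0 i).
  set (x2 := fun i => if Nat.eq_dec i D then a2
     else x0 i + Yf (F1 i) (F2 i) T1 t - Yf (F1 i) (F2 i) T2 t).
  assert (Yd : forall c1 c2, Yf c1 c2 T1 t - Yf c1 c2 T2 t = 2*eps*(t-T0)*(c2-c1)).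
  { intros c1 c2. unfold Yf, T1, T2.
    destruct (Rle_dec t (T0 - eps)); [lra|]. destruct (Rle_dec t (T0 + eps)); [lra|]. field. }
  assert (x1D : x1 D = a1) by (unfold x1; destruct (Nat.eq_dec D D); [reflexivity|congruence]).
  assert (x2D : x2 D = a2) by (unfold x2; destruct (Nat.eq_dec D D); [reflexivity|congruence]).
  assert (Om1 : Omega x1).
  { apply Hball. intros i Hi. unfold x1. destruct (Nat.eq_dec i D) as [->|n].
    - rewrite <- Ha0e, Ea0. unfold a1, T1. apply Rabs_def1.
      + assert (0 <= f1*eps*(2*T0-eps)) by (apply Rmult_le_pos; [apply Rmult_le_pos|]; lra).
        assert (0 < eps*Den) by (apply Rmult_lt_0_compat; lra). lra.
      + assert (f1*eps*(2*T0-eps) <= f1*eps*(2*T0)) by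
          (apply Rmult_le_compat_l; [apply Rmult_le_pos|]; lra).
        assert (eps*(f1*T0) < eps*Den).
        { apply Rmult_lt_compat_l; [lra|]. rewrite HDd.
          assert (0 <= 2*(t-T0)*(K+1)) by (apply Rmult_le_pos; lra).
          assert (0 <= f1*T0) by (apply Rmult_le_pos; lra). lra. }
        lra.
    - rewrite Rminus_eq_0, Rabs_R0. lra. }
  assert (Om2 : Omega x2).
  { apply Hball. intros i Hi. unfold x2. destruct (Nat.eq_dec i D) as [->|n].
    - rewrite <- Ha0e, Ea0. unfold a2, T2. apply Rabs_def1.
      + assert (f1*eps*(2*T0+eps) <= f1*eps*(3*T0)) by
          (apply Rmult_le_compat_l; [apply Rmult_le_pos|]; lra).
        assert (eps*(3*f1*T0) < eps*Den).
        { apply Rmult_lt_compat_l; [lra|]. rewrite HDd.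
          assert (0 <= 2*(t-T0)*(K+1)) by (apply Rmult_le_pos; lra). lra. }
        lra.
      + assert (0 <= f1*eps*(2*T0+eps)) by (apply Rmult_le_pos; [apply Rmult_le_pos|]; lra).
        lra.
    - replace (x0 i - (x0 i + Yf (F1 i) (F2 i) T1 t - Yf (F1 i) (F2 i) T2 t))
        with ((2*eps*(t-T0)) * (F1 i - F2 i)) by (pose proof (Yd (F1 i) (F2 i)); lra).
      assert (Hp : 0 <= 2*eps*(t-T0)) by (apply Rmult_le_pos; lra).
      rewrite Rabs_mult, (Rabs_pos_eq _ Hp).
      pose proof (maxabs_ge F1 F2 d i Hi) as Hm. rewrite <- HKd in Hm.
      assert (2*eps*(t-T0)*Rabs (F1 i - F2 i) <= 2*eps*(t-T0)*K)
        by (apply Rmult_le_compat_l; [apply Rmult_le_pos|]; lra).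
      assert (eps*(2*(t-T0)*K) < eps*Den).
      { apply Rmult_lt_compat_l; [lra|]. rewrite HDd.
        assert (0 <= 3*f1*T0) by (apply Rmult_le_pos; lra). nra. }
      lra. }
  assert (Sq1 : sqrt (2*(A - a1)/f1) = T1).
  { replace (2*(A-a1)/f1) with (T1*T1) by (unfold a1; field; lra).
    apply sqrt_square. unfold T1; lra. }
  assert (Sq2 : sqrt (2*(A - a2)/f1) = T2).
  { replace (2*(A-a2)/f1) with (T2*T2) by (unfold a2; field; lra).
    apply sqrt_square. unfold T2; lra. }
  assert (Ht0 : 0 <= t) by lra.
  apply (Hnc t x1 x2 Ht0 (Cl _ Om1) (Cl _ Om2)).
  + intros Heq. pose proof (Heq D HD) as E. rewrite x1D, x2D in E.
    unfold a1, a2, T1, T2 in E.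
    assert (0 < f1*T0*eps) by (apply Rmult_lt_0_compat; [apply Rmult_lt_0_compat|]; lra).
    lra.
  + intros i Hi. rewrite (Kx _ (Cl _ Om1) t i Ht0 Hi), (Kx _ (Cl _ Om2) t i Ht0 Hi).
    rewrite x1D, x2D, Sq1, Sq2. unfold x1, x2. destruct (Nat.eq_dec i D) as [->|n].
    * rewrite <- Hf1e, <- Hf2e.
      assert (Y1 : Yf f1 f2 T1 t = Yf f1 f2 T2 t + 2*eps*(t-T0)*(f2-f1)) by (pose proof (Yd f1 f2); lra).
      rewrite Y1. unfold a1, a2, T1, T2.
      assert (eps * ((f1-f2)*(t-T0)) = eps*(f1*T0)) by (rewrite Htdef; reflexivity).
      lra.
    * ring.
- intros Hle t x1 x2 Ht C1 C2 Hne Heq.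
  pose proof (HLam _ C1) as L1. pose proof (HLam _ C2) as L2.
  set (T1 := sqrt (2*(A - x1 (d-1)%nat)/F1 (d-1)%nat)).
  set (T2 := sqrt (2*(A - x2 (d-1)%nat)/F1 (d-1)%nat)).
  assert (E1 : x1 (d-1)%nat = A - F1 (d-1)%nat * T1 * T1 / 2).
  { unfold T1. rewrite Rmult_assoc, sqrt_sq_eq by auto. field. lra. }
  assert (E2 : x2 (d-1)%nat = A - F1 (d-1)%nat * T2 * T2 / 2).
  { unfold T2. rewrite Rmult_assoc, sqrt_sq_eq by auto. field. lra. }
  assert (P1 : 0 <= T1) by apply sqrt_pos. assert (P2 : 0 <= T2) by apply sqrt_pos.
  pose proof (Heq _ HD) as HeqD.
  rewrite (Kx _ C1 t _ Ht HD), (Kx _ C2 t _ Ht HD) in HeqD. fold T1 T2 in HeqD.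
  destruct (Rtotal_order T1 T2) as [Hl|[He|Hg]].
  + pose proof (mono _ _ A T1 T2 t HF1 Hle (conj P1 Hl) Ht). rewrite E1, E2 in HeqD. lra.
  + apply Hne. intros i Hi. pose proof (Heq i Hi) as Hq.
    rewrite (Kx _ C1 t _ Ht Hi), (Kx _ C2 t _ Ht Hi) in Hq. fold T1 T2 in Hq.
    rewrite He in Hq. lra.
  + pose proof (mono _ _ A T2 T1 t HF1 Hle (conj P2 Hg) Ht). rewrite E1, E2 in HeqD. lra.
Qed.
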